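(* Let $\mathcal{T}$ be an $l$-eligible microdata table and let $\dot{R}$ be the set of removed tuples at the end of Phase One (as described in the context). Then $OPT \ge l\cdot h(\dot{R})$.
   Context: A microdata table $\mathcal{T}$ is a multiset of $n$ tuples, each with values on $d$ quasi-identifier (QI) attributes and one sensitive attribute (SA). For a multiset $Q$ of tuples and SA value $v$, $h(Q,v)$ is the number of tuples of $Q$ with SA value $v$, $h(Q)=\max_v h(Q,v)$, and the pillars of $Q$ are the SA values $v$ with $h(Q,v)=h(Q)$. $Q$ is $l$-eligible if $|Q|\ge l\cdot h(Q)$. Partition $\mathcal{T}$ into $Q_1,\dots,Q_s$, the maximal classes of tuples having identical values on all QI attributes. Reformulated tuple minimization: choose sub-multisets $Q'_i\subseteq Q_i$ and let $R'=\mathcal{T}\setminus\bigcup_i Q'_i$, such that every $Q'_i$ and $R'$ are $l$-eligible, minimizing $|R'|$; $OPT$ denotes the minimum value. Phase One: start with $R=\emptyset$; for each $i$, while $Q_i$ is not $l$-eligible, move one tuple whose SA value is a pillar of $Q_i$ from $Q_i$ to $R$ (ties arbitrary). $\dot{R}$ denotes the resulting $R$. *)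

(* Defs.v *)
From mathcomp Require Import all_boot.
Set Implicit Arguments. Unset Strict Implicit. Unset Printing Implicit Defensive.

Section Microdata.
(* qT : type of QI-value vectors (values on all d QI attributes);
   sT : type of SA values. A tuple is a pair (QI vector, SA value).
   Multisets of tuples are sequences (order irrelevant). *)
Variables (qT sT : eqType).
Notation tup := (qT * sT)%type.

Definition hv (Q : seq tup) (v : sT) : nat := count (fun t => t.2 == v) Q.

Definition h (Q : seq tup) : nat := \max_(t <- Q) hv Q t.2.

Definition eligible (l : nat) (Q : seq tup) : bool := l * h Q <= size Q.

Definition qi_class (T : seq tup) (q : qT) : seq tup := [seq t <- T | t.1 == q].

Definition qi_values (T : seq tup) : seq qT := undup (map fst T).

(* Phase One on a single class: phase1 l Q R means that starting from Q,
   repeatedly moving one tuple whose SA value is a pillar of the current Q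
   while Q is not l-eligible (arbitrary tie-breaking), the moved tuples are R. *)
Inductive phase1 (l : nat) : seq tup -> seq tup -> Prop :=
| phase1_done Q : eligible l Q -> phase1 l Q [::]
| phase1_step Q t R : ~~ eligible l Q -> t \in Q -> hv Q t.2 = h Q ->
    phase1 l (rem t Q) R -> phase1 l Q (t :: R).

Inductive phase1_classes (l : nat) (T : seq tup) : seq qT -> seq tup -> Prop :=
| phase1c_nil : phase1_classes l T [::] [::]
| phase1c_cons q qs R Rs : phase1 l (qi_class T q) R ->
    phase1_classes l T qs Rs -> phase1_classes l T (q :: qs) (R ++ Rs).

Definition phase_one (l : nat) (T Rdot : seq tup) : Prop :=
  phase1_classes l T (qi_values T) Rdot.

(* A feasible solution of reformulated tuple minimization:
   S is the (multiset) union of the kept sub-multisets Q'_i (Q'_i is the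
   QI-class of S for the i-th QI value), R' = T \ S. *)
Definition feasible (l : nat) (T S R' : seq tup) : Prop :=
  perm_eq T (S ++ R') /\ (forall q : qT, eligible l (qi_class S q)) /\ eligible l R'.

End Microdata.

(* Main.v *)
Require Import Defs.
From mathcomp Require Import all_boot.
From mathcomp Require Import zify.

Section Aux.
Variables (qT sT : eqType).
Notation tup := (qT * sT)%type.

Lemma hv_le_h (Q : seq tup) v : hv Q v <= h Q.
Proof.
rewrite /h /hv; case: (boolP (has (fun t : tup => t.2 == v) Q)) => [/hasP [x xQ /eqP <-]|].
  exact: (@leq_bigmax_seq _ Q xpredT (fun t : tup => count (fun t0 : tup => t0.2 == t.2) Q) x).
by rewrite has_count -leqNgt leqn0 => /eqP ->.
Qed.

Lemma hv_rem (Q : seq tup) y v : y \in Q -> hv Q v = (y.2 == v) + hv (rem y Q) v.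
Proof.
move=> yQ; rewrite /hv (permP (perm_to_rem yQ)) /=; by [].
Qed.

Lemma size_dom (Q' Q : seq tup) : (forall v, hv Q' v <= hv Q v) -> size Q' <= size Q.
Proof.
elim: Q' Q => [//|x Q'' IH] Q H.
have : 0 < hv Q x.2 by apply: leq_trans (H x.2); rewrite /hv /= eqxx.
rewrite /hv -has_count => /hasP [y yQ /eqP yx].
have H' : forall v, hv Q'' v <= hv (rem y Q) v.
  move=> v; have := H v; rewrite (hv_rem _ _ v yQ) /hv /= yx; lia.
have := IH _ H'; rewrite size_rem //=.
have : 0 < size Q by case: Q yQ {H H'}.
lia.
Qed.

Lemma phase1_dom l (Q R : seq tup) : phase1 l Q R ->
  forall Q' : seq tup, eligible l Q' -> (forall v, hv Q' v <= hv Q v) ->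
  forall v, hv R v + hv Q' v <= hv Q v.
Proof.
elim=> {Q R} [Q _ Q' _ H v|Q t R nQ tQ ht _ IH Q' eQ' H v]; first by rewrite add0n.
have lt : hv Q' t.2 < hv Q t.2.
  rewrite ltn_neqAle H andbT; apply/negP => /eqP E.
  have h1 : h Q <= h Q' by rewrite -ht -E hv_le_h.
  have s1 := size_dom _ _ H.
  move: nQ eQ'; rewrite /eligible -ltnNge => nQ eQ'.
  have : l * h Q <= l * h Q' by rewrite leq_mul2l h1 orbT.
  lia.
have H' : forall u, hv Q' u <= hv (rem t Q) u.
  move=> u; have := H u; rewrite (hv_rem _ _ u tQ).
  case: (eqVneq t.2 u) => [E|ne] /=; last by [].
  rewrite -E /=; move: lt; rewrite (hv_rem _ _ t.2 tQ) eqxx /=; lia.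
have := IH Q' eQ' H' v; rewrite (hv_rem _ _ v tQ) /hv /=; lia.
Qed.

Definition cnt (qs : seq qT) v (X : seq tup) := count (fun t : tup => (t.1 \in qs) && (t.2 == v)) X.

Lemma classes_dom l (T S : seq tup) qs Rs : phase1_classes l T qs Rs -> uniq qs ->
  (forall q, eligible l (qi_class S q)) ->
  (forall P, count P S <= count P T) ->
  forall v, hv Rs v + cnt qs v S <= cnt qs v T.
Proof.
move=> Hp; elim: Hp => {qs Rs} [|q qs R Rs HR _ IH].
  move=> _ _ _ v; rewrite add0n (_ : cnt [::] v S = 0) //.
  apply/eqP; rewrite -leqn0 leqNgt -has_count; apply/hasP => -[t _].
  by rewrite in_nil.
move=> /= /andP [qn uq] eS cST v.
have Hc : forall X : seq tup, cnt (q :: qs) v X = hv (qi_class X q) v + cnt qs v X.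
  move=> X; rewrite /cnt /hv /qi_class count_filter -count_predUI.
  rewrite [X in _ = _ + X](_ : _ = 0).
    rewrite addn0; apply: eq_count => t /=; rewrite inE.
    by case: (t.2 == v); rewrite ?andbF ?andbT.
  apply/eqP; rewrite -leqn0 leqNgt -has_count; apply/hasP => -[t _ /=].
  case/andP => /andP [_ /eqP e] /andP [tq _]; move: qn; rewrite -e tq //.
have h1 : forall u, hv (qi_class S q) u <= hv (qi_class T q) u.
  move=> u; rewrite /hv /qi_class !count_filter; exact: cST.
have := phase1_dom l _ _ HR _ (eS q) h1 v.
have := IH uq eS cST v.
rewrite /hv count_cat !Hc /hv; lia.
Qed.

Lemma max_attained (s : seq tup) (F : tup -> nat) : s != [::] ->
  exists2 x, x \in s & \max_(t <- s) F t = F x.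
Proof.
elim: s => [//|x s IH] _; rewrite big_cons.
case: (eqVneq s [::]) => [->|ns].
  by exists x; rewrite ?inE ?eqxx // big_nil maxn0.
have [y ys ->] := IH ns.
case: (leqP (F y) (F x)) => c.
  by exists x; rewrite ?inE ?eqxx //; apply/maxn_idPl.
by exists y; rewrite ?inE ?ys ?orbT //; apply/maxn_idPr; apply: ltnW.
Qed.

End Aux.

Theorem corollary2 (qT sT : eqType) (l : nat) (T Rdot : seq (qT * sT)) :
  eligible l T -> phase_one l T Rdot ->
  forall S R' : seq (qT * sT), feasible l T S R' -> l * h Rdot <= size R'.
Proof.
move=> _ Hp S R' [pT [eS eR]].
case: (eqVneq Rdot [::]) => [->|nR]; first by rewrite /h big_nil muln0.
have [x _ hx] := max_attained _ _ Rdot (fun t => hv Rdot t.2) nR.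
have cST : forall P, count P S <= count P T.
  by move=> P; rewrite (permP pT) count_cat leq_addr.
have := classes_dom _ _ _ _ _ _ _ Hp (undup_uniq _) eS cST x.2.
have eT : cnt _ _ (qi_values T) x.2 T = hv T x.2.
  apply: eq_in_count => t tT /=; rewrite /qi_values mem_undup.
  by rewrite (map_f fst tT).
have eS' : cnt _ _ (qi_values T) x.2 S = hv S x.2.
  apply: eq_in_count => t tS /=; rewrite /qi_values mem_undup.
  by rewrite (map_f fst (_ : t \in T)) // (perm_mem pT) mem_cat tS.
rewrite eT eS' => Hle.
have eTSR : hv T x.2 = hv S x.2 + hv R' x.2 by rewrite /hv (permP pT) count_cat.
have h1 : hv Rdot x.2 <= hv R' x.2 by lia.
apply: leq_trans eR.
rewrite /h hx leq_mul2l; apply/orP; right.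
exact: leq_trans h1 (hv_le_h _ _ _ _).
Qed.
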